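(* For every integer $k\ge 1$, $E_k\subseteq E_{k+1}$. That is, if a number can be condensed from every multiset of $k$ decimal digits, then it can be condensed from every multiset of $k+1$ decimal digits.
   Context: Multisets are collections of numbers in which elements may repeat; $A+B$ denotes the multiset union (multiplicities add), and $[S]$ is the set of distinct elements of $S$. For a finite nonempty multiset $S$ of real numbers, $V(S)$ (''the values condensable from $S$'') is the smallest set of real numbers such that: (1) if $|S|=1$ then $S\subseteq V(S)$; (2) if $|S|\ge 2$, then for all nonempty multisets $A,B$ with $A+B=S$ and all $a\in V(A)$, $b\in V(B)$, each of $a+b,\ a-b,\ b-a,\ ab,\ a/b,\ b/a,\ a^b,\ b^a$ lies in $V(S)$ whenever it is a well-defined real number (no division by zero); (3) if $a\in V(S)$ is a nonnegative integer then $a!\in V(S)$ (so in particular $0!=1$). Let $D=\{0,1,\dots,9\}$. For $k\ge1$, $E_k=\bigcap\{V(S): S \text{ a multiset with } |S|=k,\ [S]\subseteq D\}$. *)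

(* Defs.v *)
From Stdlib Require Import Reals Lra Lia ZArith Arith List Permutation.
Import ListNotations.
Open Scope R_scope.

(* Real exponentiation a^b, as a relation "a^b is a well-defined real number c". *)
Inductive rpow_rel : R -> R -> R -> Prop :=
| rpow_pos : forall a b, 0 < a -> rpow_rel a b (Rpower a b)
| rpow_zero : forall b, 0 < b -> rpow_rel 0 b 0
| rpow_negint : forall a (z : Z), a < 0 -> rpow_rel a (IZR z) (powerRZ a z)
| rpow_negroot : forall a (p q : Z), a < 0 -> (1 < q)%Z -> Z.odd q = true ->
    Z.gcd p q = 1%Z ->
    rpow_rel a (IZR p / IZR q)
      (if Z.odd p then - Rpower (- a) (IZR p / IZR q) else Rpower (- a) (IZR p / IZR q)).

Inductive combine : R -> R -> R -> Prop :=
| comb_add : forall a b, combine a b (a + b)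
| comb_sub : forall a b, combine a b (a - b)
| comb_rsub : forall a b, combine a b (b - a)
| comb_mul : forall a b, combine a b (a * b)
| comb_div : forall a b, b <> 0 -> combine a b (a / b)
| comb_rdiv : forall a b, a <> 0 -> combine a b (b / a)
| comb_pow : forall a b c, rpow_rel a b c -> combine a b c
| comb_rpow : forall a b c, rpow_rel b a c -> combine a b c.

(* Multisets are represented by lists up to permutation.
   V S x : "x is condensable from S". *)
Inductive V : list R -> R -> Prop :=
| V_single : forall x, V [x] x
| V_split : forall S A B a b c,
    Permutation S (A ++ B) -> A <> [] -> B <> [] ->
    V A a -> V B b -> combine a b c -> V S c
| V_fact : forall S (n : nat), V S (INR n) -> V S (INR (fact n)).

Definition E (k : nat) (x : R) : Prop :=
  forall S : list nat, length S = k -> (forall d, In d S -> (d <= 9)%nat) ->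
    V (map INR S) x.

(* Main.v *)
Require Import Defs.
From Stdlib Require Import Reals List.
From Stdlib Require Import Lia Lra Permutation Arith.
Import ListNotations.
Open Scope R_scope.

Lemma subst_V : forall L x, V L x -> forall c T M, Permutation L (c::T) -> M <> [] ->
  V M c -> V (M ++ T) x.
Proof.
  induction 1 as [y | S A B a b r HP HA HB VA IHA VB IHB Hc | S n VS IH];
    intros c T M Hp HM Vc.
  - apply Permutation_length_1_inv in Hp. inversion Hp; subst.
    rewrite app_nil_r. exact Vc.
  - assert (Hin : In c (A ++ B)).
    { apply (Permutation_in c (Permutation_trans (Permutation_sym Hp) HP)). left; auto. }
    apply in_app_or in Hin as [Hin | Hin].
    + apply in_split in Hin as [A1 [A2 ->]].
      assert (HA' : Permutation (A1 ++ c :: A2) (c :: A1 ++ A2))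
        by (apply Permutation_sym, Permutation_middle).
      specialize (IHA c (A1 ++ A2) M HA' HM Vc).
      apply (V_split _ (M ++ A1 ++ A2) B a b r); auto.
      * replace ((M ++ A1 ++ A2) ++ B) with (M ++ (A1 ++ A2 ++ B))
          by (rewrite !app_assoc; reflexivity).
        apply Permutation_app_head.
        apply (Permutation_cons_inv (a:=c)).
        eapply Permutation_trans. apply Permutation_sym; exact Hp.
        eapply Permutation_trans. exact HP.
        replace ((A1 ++ c :: A2) ++ B) with (A1 ++ c :: (A2 ++ B))
          by (rewrite <- app_assoc; reflexivity).
        apply Permutation_sym. apply Permutation_middle.
      * destruct M; [congruence| discriminate].
    + apply in_split in Hin as [B1 [B2 ->]].
      assert (HB' : Permutation (B1 ++ c :: B2) (c :: B1 ++ B2))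
        by (apply Permutation_sym, Permutation_middle).
      specialize (IHB c (B1 ++ B2) M HB' HM Vc).
      apply (V_split _ A (M ++ B1 ++ B2) a b r); auto.
      * assert (HT : Permutation T (A ++ B1 ++ B2)).
        { apply (Permutation_cons_inv (a:=c)).
          eapply Permutation_trans. apply Permutation_sym; exact Hp.
          eapply Permutation_trans. exact HP.
          apply Permutation_sym.
          replace (A ++ B1 ++ c :: B2) with ((A ++ B1) ++ c :: B2)
            by (rewrite <- app_assoc; reflexivity).
          rewrite (app_assoc A B1 B2). apply Permutation_middle. }
        eapply Permutation_trans. apply Permutation_app_head. exact HT.
        rewrite (app_assoc M A), (app_assoc A M).
        apply Permutation_app_tail. apply Permutation_app_comm.
      * destruct M; [congruence| discriminate].
  - apply V_fact. eapply IH; eauto.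
Qed.

Theorem lemma4p1 : forall (k : nat) (x : R), (1 <= k)%nat -> E k x -> E (S k) x.
Proof.
  intros k x Hk HE L Hlen Hd.
  destruct L as [|a [|b rest]]; simpl in Hlen; try lia.
  set (c := if (b <=? a)%nat then (a - b)%nat else (b - a)%nat).
  assert (Hc : V [INR a; INR b] (INR c)).
  { apply (V_split _ [INR a] [INR b] (INR a) (INR b)); try discriminate.
    - apply Permutation_refl.
    - constructor.
    - constructor.
    - unfold c. destruct (Nat.leb_spec b a).
      + rewrite minus_INR by lia. constructor.
      + rewrite minus_INR by lia. constructor. }
  assert (HV : V (map INR (c :: rest)) x).
  { apply HE. simpl; lia.
    intros d [<-|Hin].
    - assert (a <= 9)%nat by (apply Hd; simpl; auto).
      assert (b <= 9)%nat by (apply Hd; simpl; auto).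
      unfold c; destruct (Nat.leb_spec b a); lia.
    - apply Hd; simpl; auto. }
  pose proof (subst_V _ _ HV (INR c) (map INR rest) [INR a; INR b]
               (Permutation_refl _) ltac:(discriminate) Hc) as H.
  exact H.
Qed.
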